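(* Let $\beta$ be a parameter and consider the map $\varphi:(x_0,x_1,x_2,x_3)\mapsto\big(x_1,x_2,x_3,(x_1x_3+\beta)/x_0\big)$ on $\mathbb{C}^4$, equivalently the recurrence $$x_{n+2}x_{n-2}=x_{n+1}x_{n-1}+\beta.$$ Define $$\mathcal{Q}_0=\frac{x_0+x_2}{x_1},\qquad \mathcal{Q}_1=\frac{x_1+x_3}{x_2},\qquad \mathcal{Q}_2=\frac{x_1}{x_0}+\frac{x_2}{x_3}+\frac{\beta}{x_0x_3},$$ and $$\tilde{\mathcal{J}}_1=\mathcal{Q}_0\mathcal{Q}_1\mathcal{Q}_2-\mathcal{Q}_0-\mathcal{Q}_1-\mathcal{Q}_2,\quad \tilde{\mathcal{J}}_2=\mathcal{Q}_0\mathcal{Q}_1+\mathcal{Q}_1\mathcal{Q}_2+\mathcal{Q}_2\mathcal{Q}_0-3,\quad \tilde{\mathcal{J}}_3=\mathcal{Q}_0\mathcal{Q}_1\mathcal{Q}_2.$$ Then $\varphi$ is superintegrable: $\tilde{\mathcal{J}}_1,\tilde{\mathcal{J}}_2,\tilde{\mathcal{J}}_3$ are three independent conserved quantities of $\varphi$, with $\{\tilde{\mathcal{J}}_1,\tilde{\mathcal{J}}_2\}_0=0=\{\tilde{\mathcal{J}}_1,\tilde{\mathcal{J}}_3\}_0$ and $\{\tilde{\mathcal{J}}_1,\mathcal{Q}_j\}_0=0$ for $j=0,1,2$, where $\{\cdot,\cdot\}_0$ is the Poisson bracket defined by $\{x_0,x_1\}_0=x_0x_1$, $\{x_0,x_2\}_0=0$,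 $\{x_0,x_3\}_0=x_0x_3$, $\{x_1,x_2\}_0=x_1x_2$, $\{x_1,x_3\}_0=0$, $\{x_2,x_3\}_0=x_2x_3$. The iterates satisfy the sixth-order linear recurrence $$x_{n+6}-\tilde{\mathcal{J}}_1\,x_{n+3}+x_n=0,$$ and the solution of the initial value problem is $$x_{3n+j}=\tilde{\mathcal{A}}_j\,T_n(\tilde{\mathcal{J}}_1/2)+\tilde{\mathcal{B}}_j\,U_n(\tilde{\mathcal{J}}_1/2),\qquad j=0,1,2,$$ where $T_n,U_n$ are the Chebyshev polynomials of the first and second kind and $$\tilde{\mathcal{A}}_j=2x_j-\frac{2x_{j+3}}{\tilde{\mathcal{J}}_1},\qquad \tilde{\mathcal{B}}_j=-x_j+\frac{2x_{j+3}}{\tilde{\mathcal{J}}_1},\qquad j=0,1,2.$$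
   Context: A conserved quantity of $\varphi$ is a function $F$ on $\mathbb{C}^4$ with $F\circ\varphi=F$. Superintegrable here means having $3$ (one less than the phase-space dimension) independent conserved quantities. The Poisson bracket is extended to rational functions by bilinearity and the Leibniz rule. The $\mathcal{Q}_j$ and $\tilde{\mathcal{J}}_1$ are evaluated at the initial data $(x_0,x_1,x_2,x_3)$, and $x_3,x_4,x_5$ denote iterates of the recurrence. *)

(* Defs.v *)
From HB Require Import structures.
From mathcomp Require Import all_boot all_order all_algebra.
From mathcomp Require Import fraction.
From mathcomp Require Import mpoly.
Set Implicit Arguments.
Unset Strict Implicit.
Unset Printing Implicit Defensive.
Import Order.TTheory GRing.Theory Num.Theory.
Local Open Scope ring_scope.
Local Open Scope quotient_scope.

Section Quantities.
Variables (K : fieldType) (b : K).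

Definition Q0 (x0 x1 x2 x3 : K) : K := (x0 + x2) / x1.
Definition Q1 (x0 x1 x2 x3 : K) : K := (x1 + x3) / x2.
Definition Q2 (x0 x1 x2 x3 : K) : K := x1 / x0 + x2 / x3 + b / (x0 * x3).

Definition J1 x0 x1 x2 x3 : K :=
  Q0 x0 x1 x2 x3 * Q1 x0 x1 x2 x3 * Q2 x0 x1 x2 x3
  - Q0 x0 x1 x2 x3 - Q1 x0 x1 x2 x3 - Q2 x0 x1 x2 x3.
Definition J2 x0 x1 x2 x3 : K :=
  Q0 x0 x1 x2 x3 * Q1 x0 x1 x2 x3 + Q1 x0 x1 x2 x3 * Q2 x0 x1 x2 x3
  + Q2 x0 x1 x2 x3 * Q0 x0 x1 x2 x3 - 3%:R.
Definition J3 x0 x1 x2 x3 : K :=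
  Q0 x0 x1 x2 x3 * Q1 x0 x1 x2 x3 * Q2 x0 x1 x2 x3.

Definition phi_pt (s : K * K * K * K) : K * K * K * K :=
  let: (a0, a1, a2, a3) := s in (a1, a2, a3, (a1 * a3 + b) / a0).

Definition xseq (x0 x1 x2 x3 : K) (n : nat) : K :=
  (iter n phi_pt (x0, x1, x2, x3)).1.1.1.

Fixpoint chebT (t : K) (n : nat) : K :=
  match n with
  | 0 => 1
  | 1 => t
  | (m.+1 as m1).+1 => 2%:R * t * chebT t m1 - chebT t m
  end.
Fixpoint chebU (t : K) (n : nat) : K :=
  match n with
  | 0 => 1
  | 1 => 2%:R * t
  | (m.+1 as m1).+1 => 2%:R * t * chebU t m1 - chebU t m
  end.
End Quantities.

Notation RF C := {fraction {mpoly C[4]}}.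

Section RationalFunctions.
Variable C : numClosedFieldType.

Definition xv (i : 'I_4) : RF C := tofrac ('X_i : {mpoly C[4]}).
Definition cst (c : C) : RF C := tofrac (c%:MP : {mpoly C[4]}).

Definition num (f : RF C) : {mpoly C[4]} := \n_(repr f).
Definition den (f : RF C) : {mpoly C[4]} := \d_(repr f).

Definition fderiv (i : 'I_4) (f : RF C) : RF C :=
  tofrac ((num f)^`M(i) * den f - num f * (den f)^`M(i)) / tofrac (den f ^+ 2).

Definition fsubst (h : 'I_4 -> RF C) (f : RF C) : RF C :=
  mmap cst h (num f) / mmap cst h (den f).

Definition phi_rf (beta : C) (i : 'I_4) : RF C :=
  match val i with
  | 0 => xv 1
  | 1 => xv 2
  | 2 => xv 3
  | _ => (xv 1 * xv 3 + cst beta) / xv 0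
  end.

Definition conserved (beta : C) (f : RF C) : Prop := fsubst (phi_rf beta) f = f.

Definition pcoef (i j : 'I_4) : int :=
  match val i, val j with
  | 0, 1 => 1 | 1, 0 => -1
  | 0, 3 => 1 | 3, 0 => -1
  | 1, 2 => 1 | 2, 1 => -1
  | 2, 3 => 1 | 3, 2 => -1
  | _, _ => 0
  end.
Definition pb0 (i j : 'I_4) : RF C := (pcoef i j)%:~R * xv i * xv j.

Definition pbracket (f g : RF C) : RF C :=
  \sum_(i < 4) \sum_(j < 4) fderiv i f * fderiv j g * pb0 i j.

Definition independent (k : nat) (fs : 'I_k -> RF C) : bool :=
  \rank (\matrix_(a < k, i < 4) fderiv i (fs a)) == k.

Definition Q0f : RF C := Q0 (xv 0) (xv 1) (xv 2) (xv 3).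
Definition Q1f : RF C := Q1 (xv 0) (xv 1) (xv 2) (xv 3).
Definition Q2f (beta : C) : RF C := Q2 (cst beta) (xv 0) (xv 1) (xv 2) (xv 3).
Definition J1f (beta : C) : RF C := J1 (cst beta) (xv 0) (xv 1) (xv 2) (xv 3).
Definition J2f (beta : C) : RF C := J2 (cst beta) (xv 0) (xv 1) (xv 2) (xv 3).
Definition J3f (beta : C) : RF C := J3 (cst beta) (xv 0) (xv 1) (xv 2) (xv 3).

Definition Jfam (beta : C) (a : 'I_3) : RF C :=
  match val a with 0 => J1f beta | 1 => J2f beta | _ => J3f beta end.
End RationalFunctions.

(* Main.v *)
Require Import Defs.
From HB Require Import structures.
From mathcomp Require Import all_boot all_order all_algebra.
From mathcomp Require Import fraction.
From mathcomp Require Import mpoly.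
From mathcomp Require Import ring.
Import Order.TTheory GRing.Theory Num.Theory.
Local Open Scope ring_scope.
Local Open Scope quotient_scope.
Set Implicit Arguments.
Unset Strict Implicit.
Unset Printing Implicit Defensive.

Section Gen.
Variable F : fieldType.
Implicit Types (a b c d : F).
Lemma qdD a a' b b' c c' d d' : b != 0 -> d != 0 ->
  ((a'*d + a*d' + (c'*b + c*b')) * (b*d) - (a*d + c*b)*(b'*d + b*d')) / (b*d)^+2
  = (a'*b - a*b')/b^+2 + (c'*d - c*d')/d^+2.
Proof. by move=> hb hd; field; rewrite hb hd. Qed.
Lemma qdM a a' b b' c c' d d' : b != 0 -> d != 0 ->
  ((a'*c + a*c') * (b*d) - (a*c)*(b'*d + b*d')) / (b*d)^+2
  = (a'*b - a*b')/b^+2 * (c / d) + (a / b) * ((c'*d - c*d')/d^+2).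
Proof. by move=> hb hd; field; rewrite hb hd. Qed.
Lemma qdV a a' b b' : a != 0 -> b != 0 ->
  (b'*a - b*a') / a^+2 = - ((a'*b - a*b')/b^+2) / (a / b) ^+ 2.
Proof. by move=> ha hb; field; rewrite ha hb. Qed.
Lemma qdN a a' b b' : b != 0 ->
  (- a' * b - - a * b') / b^+2 = - ((a'*b - a*b')/b^+2).
Proof. by move=> hb; field; rewrite hb. Qed.
End Gen.

Definition o0 : 'I_4 := @Ordinal 4 0 isT.
Definition o1 : 'I_4 := @Ordinal 4 1 isT.
Definition o2 : 'I_4 := @Ordinal 4 2 isT.
Definition o3 : 'I_4 := @Ordinal 4 3 isT.

Definition ev (K : ringType) (k : nat) (i : 'I_4) : K := if val i == k then 1 else 0.

Definition det3e (K : ringType) (E : nat -> nat -> K) :=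
  E 0 0 * E 1 1 * E 2 2 - E 0 0 * E 1 2 * E 2 1 - E 0 1 * E 1 0 * E 2 2
  + E 0 1 * E 1 2 * E 2 0 + E 0 2 * E 1 0 * E 2 1 - E 0 2 * E 1 1 * E 2 0.
Lemma det3 (K : comRingType) (G : nat -> nat -> K) :
  \det (\matrix_(i < 3, j < 3) G i j) = det3e G.
Proof.
rewrite (expand_det_row _ ord0) !big_ord_recr big_ord0 /= add0r /cofactor.
rewrite !(expand_det_row _ ord0) !big_ord_recr big_ord0 /= !add0r /cofactor.
rewrite !det_mx11 !mxE /=.
rewrite !big_ord0 ?add0r /bump /=.
rewrite /det3e; ring.
Qed.

Section GenBr.
Variables (K : fieldType) (D : 'I_4 -> K -> K) (b x0 x1 x2 x3 : K).
Hypothesis DD : forall i x y, D i (x + y) = D i x + D i y.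
Hypothesis DM : forall i x y, D i (x * y) = D i x * y + x * D i y.
Hypothesis DN : forall i x, D i (- x) = - D i x.
Hypothesis DV : forall i x, D i (x^-1) = - D i x / x ^+ 2.
Hypothesis Dn : forall i n, D i n%:R = 0.
Hypothesis Db : forall i, D i b = 0.
Hypothesis Dx0 : forall i, D i x0 = ev K 0 i.
Hypothesis Dx1 : forall i, D i x1 = ev K 1 i.
Hypothesis Dx2 : forall i, D i x2 = ev K 2 i.
Hypothesis Dx3 : forall i, D i x3 = ev K 3 i.
Hypotheses (h0 : x0 != 0) (h1 : x1 != 0) (h2 : x2 != 0) (h3 : x3 != 0).

Local Notation q0 := (Q0 x0 x1 x2 x3).
Local Notation q1 := (Q1 x0 x1 x2 x3).
Local Notation q2 := (Q2 b x0 x1 x2 x3).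

Definition br8 (f g : 'I_4 -> K) :=
  x0*x1*(f o0 * g o1 - f o1 * g o0) + x0*x3*(f o0*g o3 - f o3 * g o0)
  + x1*x2*(f o1*g o2 - f o2*g o1) + x2*x3*(f o2*g o3 - f o3*g o2).

Lemma DQ0 i : D i q0 = ((D i x0 + D i x2) * x1 - (x0 + x2) * D i x1) / x1 ^+ 2.
Proof. by rewrite /Q0 DM DD DV; field; rewrite h1. Qed.
Lemma DQ1 i : D i q1 = ((D i x1 + D i x3) * x2 - (x1 + x3) * D i x2) / x2 ^+ 2.
Proof. by rewrite /Q1 DM DD DV; field; rewrite h2. Qed.
Lemma DQ2 i : D i q2 = (D i x1 * x0 - x1 * D i x0) / x0 ^+ 2
   + (D i x2 * x3 - x2 * D i x3) / x3 ^+ 2 - b * (D i x0 * x3 + x0 * D i x3) / (x0 * x3) ^+ 2.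
Proof. by rewrite /Q2 !DD !DM !DV DM Db; field; rewrite h0 h3. Qed.

Lemma dJ1 i : D i (J1 b x0 x1 x2 x3) =
  (q1*q2 - 1) * D i q0 + (q0*q2 - 1) * D i q1 + (q0*q1 - 1) * D i q2.
Proof. rewrite /J1; move: (Q0 _ _ _ _) (Q1 _ _ _ _) (Q2 _ _ _ _ _) => a c e. by rewrite !DD !DN !DM; ring. Qed.
Lemma dJ2 i : D i (J2 b x0 x1 x2 x3) =
  (q1 + q2) * D i q0 + (q0 + q2) * D i q1 + (q0 + q1) * D i q2.
Proof. rewrite /J2; move: (Q0 _ _ _ _) (Q1 _ _ _ _) (Q2 _ _ _ _ _) => a c e. by rewrite !DD !DN !DM Dn; ring. Qed.
Lemma dJ3 i : D i (J3 b x0 x1 x2 x3) =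
  (q1*q2) * D i q0 + (q0*q2) * D i q1 + (q0*q1) * D i q2.
Proof. rewrite /J3; move: (Q0 _ _ _ _) (Q1 _ _ _ _) (Q2 _ _ _ _ _) => a c e. by rewrite !DM; ring. Qed.

Lemma br01 : br8 (D ^~ q0) (D ^~ q1) = 2%:R * (q0 * q1 - 1).
Proof.
rewrite /br8 !DQ0 !DQ1 !Dx0 !Dx1 !Dx2 !Dx3 /ev /= /Q0 /Q1.
by field; rewrite h1 h2.
Qed.
Lemma br12 : br8 (D ^~ q1) (D ^~ q2) = 2%:R * (q1 * q2 - 1).
Proof.
rewrite /br8 !DQ1 !DQ2 !Dx0 !Dx1 !Dx2 !Dx3 /ev /= /Q1 /Q2.
by field; rewrite h0 h2 h3.
Qed.
Lemma br20 : br8 (D ^~ q2) (D ^~ q0) = 2%:R * (q2 * q0 - 1).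
Proof.
rewrite /br8 !DQ0 !DQ2 !Dx0 !Dx1 !Dx2 !Dx3 /ev /= /Q0 /Q2.
by field; rewrite h0 h1 h3.
Qed.
Lemma br_anti f g : br8 f g = - br8 g f.
Proof. by rewrite /br8; ring. Qed.
Lemma br_self f : br8 f f = 0.
Proof. by rewrite /br8; ring. Qed.

Lemma br_linl (c0 c1 c2 : K) (f0 f1 f2 F g : 'I_4 -> K) :
  (forall i, F i = c0 * f0 i + c1 * f1 i + c2 * f2 i) ->
  br8 F g = c0 * br8 f0 g + c1 * br8 f1 g + c2 * br8 f2 g.
Proof. by move=> hF; rewrite /br8 !hF; ring. Qed.
Lemma br_linr (c0 c1 c2 : K) (f0 f1 f2 F g : 'I_4 -> K) :
  (forall i, F i = c0 * f0 i + c1 * f1 i + c2 * f2 i) ->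
  br8 g F = c0 * br8 g f0 + c1 * br8 g f1 + c2 * br8 g f2.
Proof. by move=> hF; rewrite /br8 !hF; ring. Qed.

Lemma brJ1q0 : br8 (D ^~ (J1 b x0 x1 x2 x3)) (D ^~ q0) = 0.
Proof.
rewrite (br_linl _ dJ1) br_self (br_anti (D^~ q1)) br01 br20; ring.
Qed.
Lemma brJ1q1 : br8 (D ^~ (J1 b x0 x1 x2 x3)) (D ^~ q1) = 0.
Proof.
rewrite (br_linl _ dJ1) br_self (br_anti (D^~ q2)) br01 br12; ring.
Qed.
Lemma brJ1q2 : br8 (D ^~ (J1 b x0 x1 x2 x3)) (D ^~ q2) = 0.
Proof.
rewrite (br_linl _ dJ1) br_self (br_anti (D^~ q0)) br20 br12; ring.
Qed.
Lemma brJ1J2 : br8 (D ^~ (J1 b x0 x1 x2 x3)) (D ^~ (J2 b x0 x1 x2 x3)) = 0.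
Proof. by rewrite (br_linr _ dJ2) brJ1q0 brJ1q1 brJ1q2; ring. Qed.
Lemma brJ1J3 : br8 (D ^~ (J1 b x0 x1 x2 x3)) (D ^~ (J3 b x0 x1 x2 x3)) = 0.
Proof. by rewrite (br_linr _ dJ3) brJ1q0 brJ1q1 brJ1q2; ring. Qed.

Definition oc (k : nat) : 'I_4 := match k with 0 => o0 | 1 => o1 | _ => o2 end.
Definition Jn (a : nat) := match a with
  0 => J1 b x0 x1 x2 x3 | 1 => J2 b x0 x1 x2 x3 | _ => J3 b x0 x1 x2 x3 end.
Definition qn (a : nat) := match a with 0 => q0 | 1 => q1 | _ => q2 end.

Lemma detJ : det3e (fun a k => D (oc k) (Jn a)) =
  (q0 - q1) * (q1 - q2) * (q2 - q0) * det3e (fun a k => D (oc k) (qn a)).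
Proof. rewrite /det3e /= !dJ1 !dJ2 !dJ3. ring. Qed.

Lemma detB : det3e (fun a k => D (oc k) (qn a)) * (x0^+2 * x1^+2 * x2^+2 * x3) =
  x0^+2 * x1 * x2 + x0 * x1 * x3 * (x1 + x3) - (x0 + x2) * (x1 + x3) * (x1 * x3 + b)
  + x1 * x2 * (x1 * x3 + b).
Proof.
rewrite /det3e /= !DQ0 !DQ1 !DQ2 !Dx0 !Dx1 !Dx2 !Dx3 /ev /=.
by field; rewrite h0 h1 h2 h3.
Qed.
Lemma dq01 : (q0 - q1) * (x1 * x2) = (x0 + x2) * x2 - (x1 + x3) * x1.
Proof. by rewrite /Q0 /Q1; field; rewrite h1 h2. Qed.
Lemma dq12 : (q1 - q2) * (x0 * x2 * x3) = (x1 + x3) * x0 * x3 - x1 * x2 * x3 - x0 * x2 * x2 - b * x2.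
Proof. by rewrite /Q1 /Q2; field; rewrite h0 h2 h3. Qed.
Lemma dq20 : (q2 - q0) * (x0 * x1 * x3) = x1 * x1 * x3 + x0 * x1 * x2 + b * x1 - (x0 + x2) * x0 * x3.
Proof. by rewrite /Q0 /Q2; field; rewrite h0 h1 h3. Qed.
End GenBr.

Lemma sum4 (V : nmodType) (F : 'I_4 -> V) : \sum_(i < 4) F i = F o0 + F o1 + F o2 + F o3.
Proof.
rewrite !big_ord_recl big_ord0 addr0 !addrA.
by congr (_ + _ + _ + _); congr F; apply: val_inj.
Qed.
Lemma sum_pb (K : fieldType) (df dg x : 'I_4 -> K) :
  \sum_(i < 4) \sum_(j < 4) df i * dg j * ((pcoef i j)%:~R * x i * x j)
  = br8 (x o0) (x o1) (x o2) (x o3) df dg.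
Proof.
rewrite !sum4 /pcoef /= /br8. ring.
Qed.


Section GenPhi.
Variable K : fieldType.
Variables (b x0 x1 x2 x3 : K).
Hypotheses (h0 : x0 != 0) (h1 : x1 != 0) (h2 : x2 != 0) (h3 : x3 != 0)
  (hy : x1 * x3 + b != 0).
Let y := (x1 * x3 + b) / x0.
Lemma Qphi1 : Q1 x1 x2 x3 y = Q2 b x0 x1 x2 x3.
Proof. by rewrite /Q1 /Q2 /y; field; rewrite h0 h3. Qed.
Lemma Qphi2 : Q2 b x1 x2 x3 y = Q0 x0 x1 x2 x3.
Proof. by rewrite /Q2 /Q0 /y; field; rewrite h0 h1 hy. Qed.
Lemma J1phi : J1 b x1 x2 x3 y = J1 b x0 x1 x2 x3.
Proof.
rewrite /J1 Qphi1 Qphi2 /=.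
have -> : Q0 x1 x2 x3 y = Q1 x0 x1 x2 x3 by [].
ring.
Qed.
Lemma J2phi : J2 b x1 x2 x3 y = J2 b x0 x1 x2 x3.
Proof.
rewrite /J2 Qphi1 Qphi2 /=.
have -> : Q0 x1 x2 x3 y = Q1 x0 x1 x2 x3 by [].
ring.
Qed.
Lemma J3phi : J3 b x1 x2 x3 y = J3 b x0 x1 x2 x3.
Proof.
rewrite /J3 Qphi1 Qphi2 /=.
have -> : Q0 x1 x2 x3 y = Q1 x0 x1 x2 x3 by [].
ring.
Qed.
End GenPhi.

Section GenSigma.
Variables (K : fieldType) (s : K -> K).
Hypothesis sD : forall x y, s (x + y) = s x + s y.
Hypothesis sM : forall x y, s (x * y) = s x * s y.
Hypothesis sN : forall x, s (- x) = - s x.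
Hypothesis sV : forall x, s (x^-1) = (s x)^-1.
Hypothesis sn : forall n, s n%:R = n%:R.
Variables (b x0 x1 x2 x3 : K).
Lemma sJ1 : s (J1 b x0 x1 x2 x3) = J1 (s b) (s x0) (s x1) (s x2) (s x3).
Proof. by rewrite /J1 /Q0 /Q1 /Q2 !(sD, sN, sM, sV). Qed.
Lemma sJ2 : s (J2 b x0 x1 x2 x3) = J2 (s b) (s x0) (s x1) (s x2) (s x3).
Proof. by rewrite /J2 sD sN sn /Q0 /Q1 /Q2 !(sD, sN, sM, sV). Qed.
Lemma sJ3 : s (J3 b x0 x1 x2 x3) = J3 (s b) (s x0) (s x1) (s x2) (s x3).
Proof. by rewrite /J3 /Q0 /Q1 /Q2 !(sD, sM, sV). Qed.
End GenSigma.

Lemma div_cross (F : fieldType) (a b c d : F) :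
  b != 0 -> d != 0 -> a * d = c * b -> a / b = c / d.
Proof. by move=> hb hd E; apply/eqP; rewrite eqr_div // E. Qed.

Lemma divK_gen (F : fieldType) (a c : F) : c != 0 -> a / c * c = a.
Proof. by move=> h; rewrite divfK. Qed.

Section Frac.
Variable R : idomainType.
Lemma frac_repr (f : {fraction R}) :
  f * tofrac (\d_(repr f)) = tofrac (\n_(repr f)).
Proof.
rewrite -{1}[f]reprK; set x := repr f; unlock tofrac.
rewrite !piE; apply/eqmodP; rewrite /= FracField.equivfE /FracField.mulf.
rewrite !numden_Ratio ?mulr1 ?oner_neq0 ?denom_ratioP //.
all: by rewrite ?mulf_neq0 ?oner_neq0 // mulrC.
Qed.

Lemma frac_nd (f : {fraction R}) :
  f = tofrac (\n_(repr f)) / tofrac (\d_(repr f)).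
Proof.
have hd : tofrac (\d_(repr f)) != 0 by rewrite tofrac_eq0 denom_ratioP.
by rewrite -frac_repr mulfK.
Qed.

Lemma frac_cross (f : {fraction R}) p q : q != 0 ->
  f = tofrac p / tofrac q -> \n_(repr f) * q = p * \d_(repr f).
Proof.
move=> q0 fE; apply/eqP; rewrite -tofrac_eq !rmorphM /= -frac_repr fE.
have hq : tofrac q != 0 by rewrite tofrac_eq0.
have hd : tofrac (\d_(repr f)) != 0 by rewrite tofrac_eq0 denom_ratioP.
by rewrite mulrAC divfK.
Qed.
End Frac.

Lemma quot_core (F : fieldType) (n n' d d' a a' b b' : F) :
  b != 0 -> d != 0 ->
  n' * b + n * b' = a' * d + a * d' ->
  n * b = a * d ->
  (n' * d + - (n * d')) / (d * d) = (a' * b - a * b') / b ^+ 2.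
Proof.
move=> hb hd E2 E1.
have En : n = a * d / b by rewrite -E1 mulfK.
have En' : n' = (a' * d + a * d' - n * b') / b by rewrite -E2 addrK mulfK.
rewrite En' En; field.
by rewrite hb hd.
Qed.

HB.instance Definition _ (C : numClosedFieldType) :=
  GRing.RMorphism.copy (@cst C) ((@tofrac _) \o (@mpolyC 4 C)).

Section Main.
Variable C : numClosedFieldType.
Local Notation RF := (RF C).
Local Notation MP := {mpoly C[4]}.

Lemma den_neq0 (f : RF) : den f != 0.
Proof. exact: denom_ratioP. Qed.

Lemma fnd (f : RF) : f = tofrac (num f) / tofrac (den f).
Proof. exact: frac_nd. Qed.

Lemma tofrac_neq0 (p : MP) : p != 0 -> tofrac p != 0.
Proof. by rewrite tofrac_eq0. Qed.

Lemma fderiv_frac i (p q : MP) : q != 0 ->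
  fderiv i (tofrac p / tofrac q) =
  (tofrac (p^`M(i)) * tofrac q - tofrac p * tofrac (q^`M(i))) / (tofrac q) ^+ 2.
Proof.
move=> q0; rewrite /fderiv; set f := tofrac p / tofrac q.
have E1 := frac_cross q0 (erefl f).
have E2 : (num f)^`M(i) * q + num f * q^`M(i) = p^`M(i) * den f + p * (den f)^`M(i).
  by rewrite -!mderivM E1.
move: E1 E2; rewrite /num /den.
set N := \n_(repr f); set D := \d_(repr f) => E1 E2.
have D0 : D != 0 by exact: denom_ratioP.
move/(congr1 (@tofrac _)): E1; move/(congr1 (@tofrac _)): E2.
rewrite !rmorphD !rmorphM /=.
set n := tofrac N; set n' := tofrac (N^`M(i)); set d := tofrac D; set d' := tofrac (D^`M(i)).
set a := tofrac p; set a' := tofrac (p^`M(i)); set b := tofrac q; set b' := tofrac (q^`M(i)).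
rewrite rmorphN rmorphM /= -/n -/d'.
have hb : b != 0 by exact: tofrac_neq0.
have hd : d != 0 by exact: tofrac_neq0.
clearbody n n' d d' a a' b b'.
move=> E2 E1. refine (@quot_core RF n n' d d' a a' b b' hb hd E2 E1).
Qed.

Lemma fnd_ex (f : RF) : exists a b : MP, b != 0 /\ f = tofrac a / tofrac b.
Proof. exists (num f), (den f); split; [exact: den_neq0 | exact: fnd]. Qed.

Lemma fderivD i (f g : RF) : fderiv i (f + g) = fderiv i f + fderiv i g.
Proof.
case: (fnd_ex f) => a [b [hb ->]]; case: (fnd_ex g) => c [d [hd ->]].
rewrite addf_div ?tofrac_neq0 // -!rmorphM -rmorphD.
rewrite !fderiv_frac ?mulf_neq0 // !mderivD !mderivM !rmorphD !rmorphM /=.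
by apply: (@qdD RF); rewrite tofrac_neq0.
Qed.

Lemma fderivM i (f g : RF) :
  fderiv i (f * g) = fderiv i f * g + f * fderiv i g.
Proof.
case: (fnd_ex f) => a [b [hb ->]]; case: (fnd_ex g) => c [d [hd ->]].
rewrite mulf_div -!rmorphM.
rewrite !fderiv_frac ?mulf_neq0 // !mderivM !rmorphD !rmorphM /=.
by apply: (@qdM RF); rewrite tofrac_neq0.
Qed.

Lemma fderivN i (f : RF) : fderiv i (- f) = - fderiv i f.
Proof.
case: (fnd_ex f) => a [b [hb ->]].
rewrite -mulNr -rmorphN.
rewrite !fderiv_frac // !mderivN !rmorphN /=.
by apply: (@qdN RF); rewrite tofrac_neq0.
Qed.

Lemma fderiv_tofrac i (p : MP) : fderiv i (tofrac p) = tofrac (p^`M(i)).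
Proof.
have -> : tofrac p = tofrac p / tofrac 1 by rewrite rmorph1 divr1.
rewrite fderiv_frac ?oner_neq0 //.
have -> : (1 : MP)^`M(i) = 0 by rewrite -mpolyC1 mderivC.
by rewrite rmorph0 rmorph1 mulr0 subr0 mulr1 expr1n divr1.
Qed.

Lemma fderivV i (f : RF) : fderiv i (f^-1) = - fderiv i f / f ^+ 2.
Proof.
case: (fnd_ex f) => a [b [hb ->]].
have [->|ha] := eqVneq a 0.
  have F0 : fderiv i (0:RF) = 0.
    by have := fderiv_tofrac i 0; rewrite rmorph0 mderiv0 rmorph0.
  by rewrite rmorph0 mul0r invr0 F0 oppr0 mul0r.
rewrite invf_div.
rewrite !fderiv_frac //.
by apply: (@qdV RF); rewrite tofrac_neq0.
Qed.

Lemma fderiv_xv i j : fderiv i (@xv C j) = if val i == val j then 1 else 0 :> RF.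
Proof.
rewrite /xv fderiv_tofrac mderivX mnm1E.
case: eqP => [<-|nji].
  rewrite eqxx.
  have -> : (U_(j) - U_(j))%MM = 0%MM by apply/mnmP => k; rewrite mnmBE subnn mnm0E.
  by rewrite mpolyX0 scale1r rmorph1.
case: eqP => [e|_]; last by rewrite scale0r rmorph0.
by case: nji; apply: val_inj.
Qed.

Lemma fderiv_cst i (c : C) : fderiv i (cst c) = 0.
Proof. by rewrite /cst fderiv_tofrac mderivC rmorph0. Qed.

Lemma fderiv_nat i n : fderiv i (n%:R : RF) = 0.
Proof. by rewrite -(rmorph_nat (@tofrac MP)) fderiv_tofrac -mpolyC_nat mderivC rmorph0. Qed.

Lemma meval_neq0 (v : 'I_4 -> C) (p : MP) : meval v p != 0 -> p != 0.
Proof. by apply: contra => /eqP ->; rewrite meval0. Qed.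

Lemma xv_neq0 j : @xv C j != 0.
Proof.
rewrite /xv tofrac_eq0; apply: (@meval_neq0 (fun _ => 1)).
by rewrite mevalXU oner_neq0.
Qed.

Lemma pbracketE (f g : RF) : pbracket f g =
  br8 (@xv C 0) (xv C 1) (xv C 2) (xv C 3) (fun i => fderiv i f) (fun j => fderiv j g).
Proof.
rewrite /pbracket /pb0 (@sum_pb RF).
by congr br8; congr xv; apply: val_inj.
Qed.

End Main.

Ltac dhyps := first [ exact: fderivD | exact: fderivM | exact: fderivN | exact: fderivV
  | exact: fderiv_nat | by move=> ?; exact: fderiv_cst | exact: xv_neq0
  | by move=> ?; rewrite fderiv_xv ].

Section MainB.
Variable C : numClosedFieldType.
Local Notation RF := (RF C).
Local Notation MP := {mpoly C[4]}.
Lemma brackets (beta : C) :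
  [/\ pbracket (J1f beta) (J2f beta) = 0,
      pbracket (J1f beta) (J3f beta) = 0,
      pbracket (J1f beta) (@Q0f C) = 0,
      pbracket (J1f beta) (@Q1f C) = 0 &
      pbracket (J1f beta) (Q2f beta) = 0].
Proof.
rewrite !pbracketE; split.
- by apply: (@brJ1J2 RF (fun i => fderiv i) (cst beta)); dhyps.
- by apply: (@brJ1J3 RF (fun i => fderiv i) (cst beta)); dhyps.
- by apply: (@brJ1q0 RF (fun i => fderiv i) (cst beta)); dhyps.
- by apply: (@brJ1q1 RF (fun i => fderiv i) (cst beta)); dhyps.
- by apply: (@brJ1q2 RF (fun i => fderiv i) (cst beta)); dhyps.
Qed.

End MainB.

Section MainC.
Variable C : numClosedFieldType.
Local Notation RF := (RF C).
Local Notation MP := {mpoly C[4]}.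
Local Notation mm h := (mmap (@cst C) h).

Lemma mmapXU (h : 'I_4 -> RF) i : mm h ('X_i) = h i.
Proof. by rewrite mmapX mmap1U. Qed.

Definition hinj (h : 'I_4 -> RF) := forall p : MP, p != 0 -> mm h p != 0.

Lemma fsubst_frac h (Hh : hinj h) (p q : MP) : q != 0 ->
  fsubst h (tofrac p / tofrac q) = mm h p / mm h q.
Proof.
move=> q0; rewrite /fsubst; set f := tofrac p / tofrac q.
have E := frac_cross q0 (erefl f).
have hq := Hh _ q0.
have hd := Hh _ (den_neq0 f).
apply: (@div_cross RF); [exact: hd | exact: hq | ].
by rewrite -!rmorphM /= /num /den E.
Qed.

Section Subst.
Variables (h : 'I_4 -> RF) (Hh : hinj h).

Lemma fsubstD f g : fsubst h (f + g) = fsubst h f + fsubst h g.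
Proof.
case: (fnd_ex f) => a [b [hb ->]]; case: (fnd_ex g) => c [d [hd ->]].
rewrite addf_div; [|exact: tofrac_neq0 hb|exact: tofrac_neq0 hd].
rewrite -!rmorphM -rmorphD.
rewrite (fsubst_frac Hh _ (mulf_neq0 hb hd)) (fsubst_frac Hh _ hb) (fsubst_frac Hh _ hd).
rewrite rmorphD !rmorphM /=.
by rewrite addf_div; [|exact: Hh _ hb|exact: Hh _ hd].
Qed.

Lemma fsubstM f g : fsubst h (f * g) = fsubst h f * fsubst h g.
Proof.
case: (fnd_ex f) => a [b [hb ->]]; case: (fnd_ex g) => c [d [hd ->]].
rewrite mulf_div -!rmorphM.
rewrite (fsubst_frac Hh _ (mulf_neq0 hb hd)) (fsubst_frac Hh _ hb) (fsubst_frac Hh _ hd).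
by rewrite !rmorphM /= mulf_div.
Qed.

Lemma fsubstN f : fsubst h (- f) = - fsubst h f.
Proof.
case: (fnd_ex f) => a [b [hb ->]].
rewrite -mulNr -rmorphN (fsubst_frac Hh _ hb) (fsubst_frac Hh _ hb) rmorphN /=.
by rewrite mulNr.
Qed.

Lemma fsubst_tofrac p : fsubst h (tofrac p) = mm h p.
Proof.
have -> : tofrac p = tofrac p / tofrac 1 by rewrite rmorph1 divr1.
by rewrite (fsubst_frac Hh _ (oner_neq0 MP)) rmorph1 divr1.
Qed.

Lemma fsubstV f : fsubst h (f^-1) = (fsubst h f)^-1.
Proof.
case: (fnd_ex f) => a [b [hb ->]].
have [->|ha] := eqVneq a 0.
  have F0 : fsubst h (0:RF) = 0.
    by have := fsubst_tofrac 0; rewrite !rmorph0.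
  by rewrite rmorph0 mul0r invr0 F0 invr0.
by rewrite invf_div (fsubst_frac Hh _ ha) (fsubst_frac Hh _ hb) invf_div.
Qed.

Lemma fsubst_nat n : fsubst h n%:R = n%:R.
Proof. by rewrite -{1}(rmorph_nat (@tofrac MP)) fsubst_tofrac rmorph_nat. Qed.

Lemma fsubst_cst (c : C) : fsubst h (cst c) = cst c.
Proof. by rewrite /cst fsubst_tofrac mmapC. Qed.

Lemma fsubst_xv j : fsubst h (xv C j) = h j.
Proof. by rewrite /xv fsubst_tofrac mmapXU. Qed.
End Subst.
Variable beta : C.

Definition k0 : RF := (xv C 0 * xv C 2 + cst beta) / xv C 3.
Definition kinv (i : 'I_4) : RF :=
  match val i with 0 => k0 | 1 => xv C 0 | 2 => xv C 1 | _ => xv C 2 end.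

Lemma num02_neq0 : xv C 0 * xv C 2 + cst beta != 0.
Proof.
have -> : xv C 0 * xv C 2 + cst beta = tofrac ('X_0 * 'X_2 + beta%:MP) by rewrite rmorphD rmorphM.
rewrite tofrac_eq0.
apply: (@meval_neq0 C (fun i => match val i with 0 => 1 | 2 => 1 - beta | _ => 0 end)).
rewrite mevalD mevalM !mevalXU mevalC /=.
by rewrite mul1r subrK oner_neq0.
Qed.

Lemma num13_neq0 : xv C 1 * xv C 3 + cst beta != 0.
Proof.
have -> : xv C 1 * xv C 3 + cst beta = tofrac ('X_1 * 'X_3 + beta%:MP) by rewrite rmorphD rmorphM.
rewrite tofrac_eq0.
apply: (@meval_neq0 C (fun i => match val i with 1 => 1 | 3 => 1 - beta | _ => 0 end)).
rewrite mevalD mevalM !mevalXU mevalC /=.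
by rewrite mul1r subrK oner_neq0.
Qed.

Lemma k0_neq0 : k0 != 0.
Proof. apply: mulf_neq0; [exact: num02_neq0 | rewrite invr_eq0; exact: xv_neq0]. Qed.

Definition Pinj (p : MP) := exists (r : MP) (n : nat),
  mm (phi_rf beta) p * (xv C 0) ^+ n = tofrac r /\ mm kinv r = tofrac p * k0 ^+ n.

Lemma PC c : Pinj c%:MP.
Proof.
exists c%:MP, 0%N; rewrite !expr0 !mulr1 !mmapC; split; by [].
Qed.

Lemma PD p q : Pinj p -> Pinj q -> Pinj (p + q).
Proof.
move=> [r1 [n1 [E1 F1]]] [r2 [n2 [E2 F2]]].
exists (r1 * 'X_0 ^+ n2 + r2 * 'X_0 ^+ n1), (n1 + n2)%N; split.
  rewrite !rmorphD !rmorphM !rmorphXn /= -E1 -E2 exprD.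
  rewrite -[tofrac 'X_0]/(xv C 0); ring.
rewrite !rmorphD !rmorphM !rmorphXn /= F1 F2 !mmapXU exprD.
rewrite /kinv /=; ring.
Qed.

Lemma PM p q : Pinj p -> Pinj q -> Pinj (p * q).
Proof.
move=> [r1 [n1 [E1 F1]]] [r2 [n2 [E2 F2]]].
exists (r1 * r2), (n1 + n2)%N; split.
  rewrite !rmorphM /= -E1 -E2 exprD; ring.
rewrite !rmorphM /= F1 F2 exprD; ring.
Qed.

Lemma PXU i : Pinj 'X_i.
Proof.
case: i => [[|[|[|[|m]]]] Hi].
- have -> : Ordinal Hi = 0 :> 'I_4 by apply: val_inj.
  by exists 'X_1, 0%N; rewrite expr0 !mulr1 !mmapXU.
- have -> : Ordinal Hi = 1 :> 'I_4 by apply: val_inj.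
  by exists 'X_2, 0%N; rewrite expr0 !mulr1 !mmapXU.
- have -> : Ordinal Hi = 2%:R :> 'I_4 by apply: val_inj.
  by exists 'X_3, 0%N; rewrite expr0 !mulr1 !mmapXU.
- have -> : Ordinal Hi = 3%:R :> 'I_4 by apply: val_inj.
  exists ('X_1 * 'X_3 + beta%:MP), 1%N; rewrite !expr1 mmapXU; split.
    have -> : phi_rf beta 3%:R = (xv C 1 * xv C 3 + cst beta) / xv C 0 by [].
    transitivity (xv C 1 * xv C 3 + cst beta).
      by apply: (@divK_gen RF); exact: xv_neq0.
    by rewrite rmorphD rmorphM.
  rewrite rmorphD rmorphM /= !mmapXU mmapC /k0.
  symmetry; rewrite mulrC.
  by apply: (@divK_gen RF); exact: xv_neq0.
- by [].
Qed.

Lemma PXn q k : Pinj q -> Pinj (q ^+ k).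
Proof.
move=> Pq; elim: k => [|k IH]; first by rewrite expr0 -mpolyC1; exact: PC.
by rewrite exprS; apply: PM.
Qed.

Lemma Pall p : Pinj p.
Proof.
elim/mpolyind: p => [|c m p _ _ IH]; first by rewrite -mpolyC0; exact: PC.
apply: PD => //; rewrite -mul_mpolyC; apply: PM; first exact: PC.
rewrite mpolyXE_id; elim/big_rec: _ => [|i y _ Py]; first by rewrite -mpolyC1; exact: PC.
by apply: PM => //; apply: PXn; apply: PXU.
Qed.

Lemma inj_phi : hinj (phi_rf beta).
Proof.
move=> p p0; apply/negP => /eqP E.
have [r [n [E1 F1]]] := Pall p.
move: E1; rewrite E mul0r => /esym/eqP; rewrite tofrac_eq0 => /eqP r0.
move: F1; rewrite r0 mmap0 => /esym/eqP.
rewrite mulf_eq0 expf_eq0 (negbTE k0_neq0) andbF orbF tofrac_eq0.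
by rewrite (negbTE p0).
Qed.

Ltac shyps := first [ exact: fsubstD inj_phi | exact: fsubstM inj_phi | exact: fsubstN inj_phi
  | exact: fsubstV inj_phi | exact: fsubst_nat inj_phi | exact: inj_phi ].

Lemma sxv0 : fsubst (phi_rf beta) (xv C 0) = xv C 1.
Proof. exact: (fsubst_xv inj_phi 0). Qed.
Lemma sxv1 : fsubst (phi_rf beta) (xv C 1) = xv C 2.
Proof. exact: (fsubst_xv inj_phi 1). Qed.
Lemma sxv2 : fsubst (phi_rf beta) (xv C 2) = xv C 3.
Proof. exact: (fsubst_xv inj_phi 2). Qed.
Lemma sxv3 : fsubst (phi_rf beta) (xv C 3) = (xv C 1 * xv C 3 + cst beta) / xv C 0.
Proof. exact: (fsubst_xv inj_phi 3). Qed.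
Lemma scst : fsubst (phi_rf beta) (cst beta) = cst beta.
Proof. exact: (fsubst_cst inj_phi). Qed.

Lemma cons_all : [/\ conserved beta (J1f beta), conserved beta (J2f beta)
                  & conserved beta (J3f beta)].
Proof.
have nz := num13_neq0.
split; rewrite /conserved.
- rewrite /J1f (@sJ1 RF (fsubst (phi_rf beta))); try shyps.
  transitivity (J1 (cst beta) (xv C 1) (xv C 2) (xv C 3) ((xv C 1 * xv C 3 + cst beta) / xv C 0)).
    by congr J1; [exact: scst|exact: sxv0|exact: sxv1|exact: sxv2|exact: sxv3].
  by apply: (@J1phi RF); (exact: xv_neq0 || exact: nz).
- rewrite /J2f (@sJ2 RF (fsubst (phi_rf beta))); try shyps.
  transitivity (J2 (cst beta) (xv C 1) (xv C 2) (xv C 3) ((xv C 1 * xv C 3 + cst beta) / xv C 0)).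
    by congr J2; [exact: scst|exact: sxv0|exact: sxv1|exact: sxv2|exact: sxv3].
  by apply: (@J2phi RF); (exact: xv_neq0 || exact: nz).
- rewrite /J3f (@sJ3 RF (fsubst (phi_rf beta))); try shyps.
  transitivity (J3 (cst beta) (xv C 1) (xv C 2) (xv C 3) ((xv C 1 * xv C 3 + cst beta) / xv C 0)).
    by congr J3; [exact: scst|exact: sxv0|exact: sxv1|exact: sxv2|exact: sxv3].
  by apply: (@J3phi RF); (exact: xv_neq0 || exact: nz).
Qed.
End MainC.

Section MainD.
Variable C : numClosedFieldType.
Local Notation RF := (RF C).
Local Notation MP := {mpoly C[4]}.
Variable beta : C.

Lemma nz_of (f m : RF) (P : MP) : f * m = tofrac P -> P != 0 -> f != 0.
Proof.
move=> E; apply: contra => /eqP f0.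
by move: E; rewrite f0 mul0r => /esym/eqP; rewrite tofrac_eq0.
Qed.

Local Notation x0 := (xv C 0).
Local Notation x1 := (xv C 1).
Local Notation x2 := (xv C 2).
Local Notation x3 := (xv C 3).
Local Notation bb := (cst beta).

Definition G (a k : nat) : RF := fderiv (oc k) (Jn bb x0 x1 x2 x3 a).

Lemma HAS : \matrix_(a < 3, i < 4) fderiv i (Jfam beta a) *m
   \matrix_(i < 4, k < 3) (if val i == val k then 1 else 0 : RF)
   = \matrix_(a < 3, k < 3) G a k.
Proof.
apply/matrixP => a k; rewrite !mxE sum4 !mxE.
case: a => [[|[|[|?]]] ?] //; case: k => [[|[|[|?]]] ?] //=.
all: rewrite ?mulr1 ?mulr0 ?addr0 ?add0r.
all: by [].
Qed.

Definition vpt (a0 a1 a2 a3 : C) (i : 'I_4) : C :=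
  match val i with 0 => a0 | 1 => a1 | 2 => a2 | _ => a3 end.

Lemma indep : independent (Jfam beta).
Proof.
rewrite /independent eqn_leq rank_leq_row /=.
apply: leq_trans (mxrankM_maxl _ (\matrix_(i < 4, k < 3) (if val i == val k then 1 else 0 : RF))).
rewrite HAS mxrank_unit // unitmxE unitfE det3 /G.
rewrite (@detJ RF (fun i => fderiv i)); try dhyps.
apply: mulf_neq0; [apply: mulf_neq0; [apply: mulf_neq0|]|].
- apply: (@nz_of _ (x1 * x2) (('X_0 + 'X_2) * 'X_2 - ('X_1 + 'X_3) * 'X_1)).
    rewrite (@dq01 RF); try dhyps.
    by rewrite rmorphB !rmorphM !rmorphD.
  apply: (@meval_neq0 C (vpt 0 0 1 0)).
  rewrite mevalB !mevalM !mevalD !mevalXU /vpt /=.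
  by rewrite !add0r !mulr0 subr0 mulr1 oner_neq0.
- apply: (@nz_of _ (x0 * x2 * x3)
    (('X_1 + 'X_3) * 'X_0 * 'X_3 - 'X_1 * 'X_2 * 'X_3 - 'X_0 * 'X_2 * 'X_2 - beta%:MP * 'X_2)).
    rewrite (@dq12 RF); try dhyps.
    by rewrite !rmorphB !rmorphM !rmorphD.
  apply: (@meval_neq0 C (vpt 1 0 0 1)).
  rewrite !mevalB !mevalM !mevalD !mevalXU mevalC /vpt /=.
  by rewrite !mulr0 !mul0r !subr0 add0r !mulr1 oner_neq0.
- apply: (@nz_of _ (x0 * x1 * x3)
    ('X_1 * 'X_1 * 'X_3 + 'X_0 * 'X_1 * 'X_2 + beta%:MP * 'X_1 - ('X_0 + 'X_2) * 'X_0 * 'X_3)).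
    rewrite (@dq20 RF); try dhyps.
    by rewrite !rmorphB !rmorphD !rmorphM !rmorphD.
  apply: (@meval_neq0 C (vpt 1 0 0 1)).
  rewrite !mevalB !mevalD !mevalM !mevalD !mevalXU mevalC /vpt /=.
  rewrite (_ : _ - _ = -1); first by rewrite oppr_eq0 oner_neq0.
  ring.
- apply: (@nz_of _ (x0^+2 * x1^+2 * x2^+2 * x3)
    ('X_0^+2 * 'X_1 * 'X_2 + 'X_0 * 'X_1 * 'X_3 * ('X_1 + 'X_3)
     - ('X_0 + 'X_2) * ('X_1 + 'X_3) * ('X_1 * 'X_3 + beta%:MP)
     + 'X_1 * 'X_2 * ('X_1 * 'X_3 + beta%:MP))).
    rewrite (@detB RF (fun i => fderiv i)); try dhyps.
    by rewrite !(rmorphD, rmorphB, rmorphN, rmorphM, rmorphXn).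
  apply: (@meval_neq0 C (vpt 2 2 (-1) (-4))).
  rewrite !(mevalD, mevalB, mevalN, mevalM, rmorphXn, mevalXU, mevalC) /vpt /=.
  rewrite (_ : _ + _ = 24%:R); first by rewrite pnatr_eq0.
  ring.
Qed.
End MainD.

Section Numeric.
Variables (K : fieldType) (b x0 x1 x2 x3 : K).
Local Notation x := (xseq b x0 x1 x2 x3).
Local Notation s n := (iter n (phi_pt b) (x0, x1, x2, x3)).

Lemma s_x1 n : (s n).1.1.2 = x n.+1.
Proof. by rewrite /xseq iterS; case: (s n) => [[[a0 a1] a2] a3]. Qed.
Lemma s_x2 n : (s n).1.2 = x n.+2.
Proof.
rewrite -s_x1 iterS; case: (s n) => [[[a0 a1] a2] a3] //.
Qed.
Lemma s_x3 n : (s n).2 = x n.+3.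
Proof. by rewrite -s_x2 iterS; case: (s n) => [[[a0 a1] a2] a3]. Qed.
Lemma x_step n : x n.+4 = (x n.+1 * x n.+3 + b) / x n.
Proof.
rewrite -s_x3 iterS -s_x1 -s_x3 /xseq.
by case: (s n) => [[[a0 a1] a2] a3].
Qed.

Lemma rec6 (y0 y1 y2 y3 : K) : y0 != 0 -> y1 != 0 -> y2 != 0 -> y3 != 0 ->
  let y4 := (y1 * y3 + b) / y0 in let y5 := (y2 * y4 + b) / y1 in
  let y6 := (y3 * y5 + b) / y2 in
  y6 - J1 b y0 y1 y2 y3 * y3 + y0 = 0.
Proof.
move=> h0 h1 h2 h3 y4 y5 y6; rewrite /y6 /y5 /y4 /J1 /Q0 /Q1 /Q2.
by field; rewrite h0 h1 h2 h3.
Qed.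

Hypothesis xnz : forall n, x n != 0.
Let j1 := J1 b x0 x1 x2 x3.

Lemma J1_orbit n : J1 b (x n) (x n.+1) (x n.+2) (x n.+3) = j1.
Proof.
elim: n => [|n IH] //.
rewrite -IH (x_step n).
apply: J1phi => //.
have := xnz n.+4; rewrite x_step.
by apply: contra => /eqP ->; rewrite mul0r.
Qed.

Lemma recur n : x (n + 6)%N - j1 * x (n + 3)%N + x n = 0.
Proof.
have -> : (n + 6 = n.+3.+3)%N by rewrite !addnS addn0.
have -> : (n + 3 = n.+3)%N by rewrite !addnS addn0.
rewrite -(J1_orbit n) (x_step n.+2) (x_step n.+1) (x_step n).
exact: rec6.
Qed.

Hypothesis h2 : (2%:R : K) != 0.

Lemma cheb_sol : j1 != 0 -> forall (j : nat) (n : nat), (j < 3)%N ->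
  x (3 * n + j)%N =
    (2%:R * x j - 2%:R * x (j + 3)%N / j1) * chebT (j1 / 2%:R) n
    + (- x j + 2%:R * x (j + 3)%N / j1) * chebU (j1 / 2%:R) n.
Proof.
move=> hj j n _.
set A := (2%:R * x j - 2%:R * x (j + 3)%N / j1).
set B := (- x j + 2%:R * x (j + 3)%N / j1).
set t := j1 / 2%:R.
have ht : 2%:R * t = j1 by rewrite /t mulrC divfK.
suff : x (3 * n + j)%N = A * chebT t n + B * chebU t n /\
       x (3 * n.+1 + j)%N = A * chebT t n.+1 + B * chebU t n.+1 by case.
elim: n => [|n [IH1 IH2]].
  split.
    by rewrite /= /A /B; ring.
  have -> : (3 * 1 + j = j + 3)%N by rewrite addnC.
  rewrite /= /A /B -ht /t.
  by field; rewrite h2 hj.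
split=> //.
have := recur (3 * n + j)%N.
have -> : (3 * n + j + 6 = 3 * n.+2 + j)%N by ring.
have -> : (3 * n + j + 3 = 3 * n.+1 + j)%N by ring.
rewrite IH1 IH2 => E.
have -> : chebT t n.+2 = 2%:R * t * chebT t n.+1 - chebT t n by [].
have -> : chebU t n.+2 = 2%:R * t * chebU t n.+1 - chebU t n by [].
rewrite ht.
apply/eqP; rewrite -subr_eq0; apply/eqP; rewrite -E; ring.
Qed.
End Numeric.

Theorem theorem3p9 (C : numClosedFieldType) (beta : C) :
  [/\ (* superintegrability: three independent conserved quantities *)
      [/\ conserved beta (J1f beta), conserved beta (J2f beta),
          conserved beta (J3f beta) & independent (Jfam beta)],
      (* Poisson commutation relations *)
      [/\ pbracket (J1f beta) (J2f beta) = 0,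
          pbracket (J1f beta) (J3f beta) = 0,
          pbracket (J1f beta) (@Q0f C) = 0,
          pbracket (J1f beta) (@Q1f C) = 0 &
          pbracket (J1f beta) (Q2f beta) = 0] &
      (* linear recurrence and explicit solution of the initial value problem *)
      forall x0 x1 x2 x3 : C,
        let x := xseq beta x0 x1 x2 x3 in
        let j1 := J1 beta x0 x1 x2 x3 in
        (forall n, x n != 0) ->
        (forall n, x (n + 6)%N - j1 * x (n + 3)%N + x n = 0) /\
        (j1 != 0 ->
         forall (j : nat) (n : nat), (j < 3)%N ->
           x (3 * n + j)%N =
             (2%:R * x j - 2%:R * x (j + 3)%N / j1) * chebT (j1 / 2%:R) n
             + (- x j + 2%:R * x (j + 3)%N / j1) * chebU (j1 / 2%:R) n)].
Proof.
have [c1 c2 c3] := @cons_all C beta.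
have h2 : (2%:R : C) != 0 by rewrite pnatr_eq0.
split.
- by split; [exact: c1 | exact: c2 | exact: c3 | exact: (@indep C beta)].
- exact: (@brackets C beta).
- move=> x0 x1 x2 x3 x j1 hx; split.
    by move=> n; exact: (recur hx).
  move=> hj j n hj3.
  exact: (@cheb_sol C beta x0 x1 x2 x3 hx h2 hj j n hj3).
Qed.
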